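(* Let $a,b\in\mathbb{Z}$, $a\ne0$, $\mathcal{G}(x)=x^8+ax^6+bx^4+ax^2+1$, and $W_1=b+2-2a$, $W_2=b+2+2a$, $W_3=a^2-4b+8$. (1) If there is a prime $q$ with $q^2\mid W_1$ or $q^2\mid W_2$, then $\mathcal{G}(x)$ is not monogenic. (2) If $W_1$ and $W_2$ are squarefree and there is a prime $q\ge 3$ with $q^2\mid W_3$, then $\mathcal{G}(x)$ is not monogenic. (3) If $W_1,W_2$ are squarefree, $W_3$ is not divisible by the square of any odd prime, and $(a\bmod 4,\ b\bmod 4)\in\{(0,1),(2,3)\}$, then $\mathcal{G}(x)$ is not monogenic.
   Context: A monic polynomial $f(x)\in\mathbb{Z}[x]$ is monogenic if it is irreducible over $\mathbb{Q}$ and $\mathbb{Z}[\theta]$ is the full ring of integers of $\mathbb{Q}(\theta)$, where $f(\theta)=0$. *)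

(* Defs.v *)
From HB Require Import structures.
From mathcomp Require Import all_boot all_order all_algebra all_field.
Set Implicit Arguments. Unset Strict Implicit. Unset Printing Implicit Defensive.
Import Order.TTheory GRing.Theory Num.Theory.
Local Open Scope ring_scope.

(* Q(theta) as a subset of algC: values of rational polynomials at theta. *)
Definition in_Qadj (theta x : algC) : Prop :=
  exists p : {poly rat}, x = (map_poly ratr p).[theta].

(* Z[theta] as a subset of algC: values of integer polynomials at theta. *)
Definition in_Zadj (theta x : algC) : Prop :=
  exists p : {poly int}, x = (map_poly intr p).[theta].

Definition in_ring_of_integers (theta x : algC) : Prop :=
  in_Qadj theta x /\ x \in Aint.

Definition monogenic (f : {poly int}) : Prop :=
  f \is monic /\
  irreducible_poly (map_poly intr f : {poly rat}) /\
  exists theta : algC, root (map_poly intr f) theta /\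
    (forall x, in_ring_of_integers theta x <-> in_Zadj theta x).

Definition squarefree_int (z : int) : Prop :=
  forall q : nat, prime q -> ~~ (((q ^ 2)%N)%:Z %| z)%Z.

Definition Gpoly (a b : int) : {poly int} :=
  'X^8 + a%:P * 'X^6 + b%:P * 'X^4 + a%:P * 'X^2 + 1.

(* Main.v *)
Require Import Defs.
From HB Require Import structures.
From mathcomp Require Import all_boot all_order all_algebra all_field.
From mathcomp Require Import ring.
Import Order.TTheory GRing.Theory Num.Theory.
Local Open Scope ring_scope.

Lemma Aint_comp (x : algC) (p : {poly algC}) : p \is monic -> (1 < size p)%N ->
  p \is a polyOver Num.int -> p.[x] \in Aint -> x \in Aint.
Proof.
move=> mp sp pp Hy.
apply: (@root_monic_Aint (minCpoly p.[x] \Po p)).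
- by rewrite /root horner_comp; apply: root_minCpoly.
- rewrite monicE lead_coef_comp // (monicP mp) expr1n mulr1.
  by rewrite -monicE minCpoly_monic.
- by apply: polyOver_comp; [exact: Hy | exact: pp].
Qed.

Lemma Aint_sqrt (x : algC) : x ^+ 2 \in Aint -> x \in Aint.
Proof.
move=> Hy; apply: (@Aint_comp x 'X^2).
- exact: monicXn.
- by rewrite size_polyXn.
- exact: polyOverXn.
- by rewrite hornerXn.
Qed.

Lemma Aint_quad (x : algC) : x * (x - 1) \in Aint -> x \in Aint.
Proof.
move=> Hy; apply: (@Aint_comp x ('X * ('X - 1%:P))).
- by rewrite monicMl ?monicX ?monicXsubC.
- by rewrite size_monicM ?monicX ?size_polyX ?size_XsubC ?polyXsubC_eq0.
- apply/polyOverP => j; rewrite coefXM coefB coefX coefC.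
  case: j => [|[|[|j]]] /=; rewrite ?subr0 ?sub0r ?subrr.
  + by apply/intrP; exists 0.
  + by apply/intrP; exists (-1); rewrite rmorphN rmorph1.
  + by apply/intrP; exists 1; rewrite rmorph1.
  + by apply/intrP; exists 0.
- by rewrite hornerM hornerX hornerXsubC.
Qed.

Lemma irr_root_small (Gq rq : {poly rat}) (t : algC) :
  irreducible_poly Gq -> (size rq < size Gq)%N ->
  root (map_poly ratr Gq) t -> root (map_poly ratr rq) t -> rq = 0.
Proof.
move=> irr srq rG rr; apply/eqP; apply: contraTT rr => nz.
have cop : coprimep Gq rq.
  rewrite irreducible_poly_coprime //; apply/negP => /(dvdp_leq nz).
  by rewrite leqNgt srq.
by rewrite /root; apply: (coprimep_root _ rG); rewrite coprimep_map.
Qed.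

Lemma size_map_le (R S : nzRingType) (f : R -> S) (p : {poly R}) :
  (size (map_poly f p) <= size p)%N.
Proof. by rewrite map_polyE (leq_trans (size_Poly _)) // size_map. Qed.

Lemma notmono (G : {poly int}) (t : algC) (n : nat) (c : nat -> int) (i : nat) :
  G \is monic -> size G = 9%N ->
  irreducible_poly (map_poly intr G : {poly rat}) ->
  root (map_poly intr G) t -> (1 < n)%N -> (i < 8)%N ->
  ~~ ((n%:Z) %| c i)%Z ->
  (\sum_(j < 8) (c j)%:~R * t ^+ j) / n%:R \in Aint ->
  ~ (forall x, in_ring_of_integers t x <-> in_Zadj t x).
Proof.
move=> monG sG irrG rootG n1 i8 ndiv Hint H.
set eta := _ / _ in Hint.
have nn0 : (n%:R : algC) != 0 by rewrite pnatr_eq0 -lt0n (ltn_trans _ n1).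
have Hq : in_Qadj t eta.
  exists (\poly_(j < 8) ((c j)%:~R / n%:R)).
  rewrite (@horner_coef_wide _ 8); last first.
    by rewrite (leq_trans (size_map_le _ _ _ _)) // size_poly.
  rewrite /eta mulr_suml; apply: eq_bigr => j _.
  rewrite coef_map coef_poly ltn_ord /= fmorph_div rmorph_int rmorph_nat.
  by rewrite mulrAC.
have [p Hp] := (H eta).1 (conj Hq Hint).
have G0 : G != 0 by apply: monic_neq0.
set p1 := Pdiv.CommonRing.rmodp p G.
have sp1 : (size p1 < 9)%N by rewrite -sG Pdiv.CommonRing.ltn_rmodpN0.
have e1 : (map_poly intr p : {poly algC}).[t] = (map_poly intr p1).[t].
  rewrite {1}(Pdiv.RingMonic.rdivp_eq monG p) rmorphD rmorphM /= !hornerE.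
  by move: rootG => /rootP ->; rewrite mulr0 add0r.
set r : {poly int} := \poly_(j < 8) (n%:Z * p1`_j - c j).
have r0 : root (map_poly ratr (map_poly intr r : {poly rat})) t.
  rewrite -map_poly_comp /root (@horner_coef_wide _ 8); last first.
    by rewrite (leq_trans (size_map_le _ _ _ _)) // size_poly.
  apply/eqP; rewrite (eq_bigr (fun j : 'I_8 =>
      n%:R * ((p1`_j)%:~R * t ^+ j) - (c j)%:~R * t ^+ j)); last first.
    move=> j _; rewrite coef_map coef_poly ltn_ord /= rmorph_int.
    by rewrite rmorphB rmorphM /= mulrBl mulrA.
  rewrite sumrB -mulr_sumr (eq_bigr (fun j : 'I_8 => (map_poly intr p1)`_j * t ^+ j)); last by move=> j _; rewrite coef_map.
  rewrite -(@horner_coef_wide _ 8 (map_poly intr p1)); last first.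
    by rewrite (leq_trans (size_map_le _ _ _ _)).
  rewrite -e1 -Hp /eta mulrC divfK // subrr //.
have sr : (size (map_poly intr r : {poly rat}) < size (map_poly intr G : {poly rat}))%N.
  rewrite [X in (_ < X)%N]size_map_inj_poly ?sG; [|exact: intr_inj|exact: rmorph0].
  by rewrite (leq_ltn_trans (size_map_le _ _ _ _)) // (leq_ltn_trans (size_poly _ _)).
have rG : root (map_poly ratr (map_poly intr G : {poly rat})) t.
  by rewrite -map_poly_comp (eq_map_poly (fun z => rmorph_int ratr z)).
have := irr_root_small _ _ _ irrG sr rG r0.
move/(congr1 (fun q : {poly rat} => q`_i)).
rewrite coef_map coef_poly i8 coef0 /= => /eqP; rewrite intr_eq0 subr_eq0 => /eqP ci.
by move: ndiv; rewrite -ci dvdz_mulr.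
Qed.

Lemma Gpoly_Poly a b : Gpoly a b = Poly [:: 1; 0; a; 0; b; 0; a; 0; 1].
Proof.
apply/polyP=> j; rewrite coef_Poly /Gpoly !coefD !coefCM !coefXn coef1.
case: j => [|[|[|[|[|[|[|[|[|j]]]]]]]]] /=.
all: by rewrite ?(mulr0, mulr1, addr0, add0r) ?nth_nil.
Qed.

Lemma Gpoly_size a b : size (Gpoly a b) = 9%N.
Proof. by rewrite Gpoly_Poly (@PolyK _ 0) ?oner_eq0. Qed.

Lemma Gpoly_monic a b : Gpoly a b \is monic.
Proof. by rewrite monicE lead_coefE Gpoly_size Gpoly_Poly (@PolyK _ 0) ?oner_eq0. Qed.

Lemma Gpoly_eval a b (t : algC) :
  (map_poly intr (Gpoly a b)).[t] =
  t ^+ 8 + a%:~R * t ^+ 6 + b%:~R * t ^+ 4 + a%:~R * t ^+ 2 + 1.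
Proof.
rewrite (@horner_coef_wide _ 9); last first.
  by rewrite map_polyE (leq_trans (size_Poly _)) // size_map Gpoly_size.
rewrite !big_ord_recr big_ord0 /=.
rewrite !coef_map /= Gpoly_Poly !coef_Poly /=.
rewrite !(mulr0z, mulr1z) !mul0r !addr0 add0r mul1r expr0.
ring.
Qed.

Lemma cast_nat2 (q : nat) : (((q ^ 2)%N)%:Z)%:~R = (q%:R : algC) ^+ 2.
Proof. by rewrite -pmulrn natrX. Qed.

Lemma not_mono_G (a b : int) (n : nat) (c : nat -> int) (i : nat) :
  (1 < n)%N -> (i < 8)%N -> ~~ ((n%:Z) %| c i)%Z ->
  (forall t : algC,
     t ^+ 8 + a%:~R * t ^+ 6 + b%:~R * t ^+ 4 + a%:~R * t ^+ 2 + 1 = 0 ->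
     t \in Aint ->
     (\sum_(j < 8) (c j)%:~R * t ^+ j) / n%:R \in Aint) ->
  ~ monogenic (Gpoly a b).
Proof.
move=> n1 i8 nd HA [_ [irr [t [rt Hm]]]].
have Gt := rt; move/rootP: Gt; rewrite Gpoly_eval => Gt.
have tA : t \in Aint.
  apply: (root_monic_Aint rt); first exact: monic_map (Gpoly_monic a b).
  by apply/polyOverP => j; rewrite coef_map intr_int.
exact: (@notmono (Gpoly a b) t n c i (Gpoly_monic a b) (Gpoly_size a b) irr rt n1 i8 nd (HA t Gt tA) Hm).
Qed.

Ltac aint := repeat first [ assumption | exact: Aint_int | exact: rpred_nat
  | apply: rpredX | rewrite rpredN | apply: rpredD | apply: rpredB | apply: rpredM ].

Theorem mainTheorem3 (a b : int) (ha : a != 0) :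
  let W1 := b + 2 - 2 * a in
  let W2 := b + 2 + 2 * a in
  let W3 := a ^+ 2 - 4 * b + 8 in
  [/\ (exists q : nat, prime q /\
         ((((q ^ 2)%N)%:Z %| W1)%Z \/ (((q ^ 2)%N)%:Z %| W2)%Z)) ->
        ~ monogenic (Gpoly a b),
      (squarefree_int W1 -> squarefree_int W2 ->
       (exists q : nat, prime q /\ (3 <= q)%N /\ (((q ^ 2)%N)%:Z %| W3)%Z) ->
        ~ monogenic (Gpoly a b))
    & (squarefree_int W1 -> squarefree_int W2 ->
       (forall q : nat, prime q -> odd q -> ~~ (((q ^ 2)%N)%:Z %| W3)%Z) ->
       ((a %% 4)%Z = 0 /\ (b %% 4)%Z = 1 \/ (a %% 4)%Z = 2 /\ (b %% 4)%Z = 3) ->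
        ~ monogenic (Gpoly a b))].
Proof.
move=> W1 W2 W3; split.
- case=> q [pq Hd].
  have q1 : (1 < q)%N by apply: prime_gt1.
  have nd1 : ~~ ((q%:Z) %| 1)%Z.
    by rewrite dvdzE /= dvdn1; apply/negP => /eqP q1'; move: q1; rewrite q1'.
  have Q0 : (q%:R : algC) != 0 by rewrite pnatr_eq0 -lt0n (ltn_trans _ q1).
  case: Hd => /dvdzP [k Hk].
  + apply: (@not_mono_G a b q (fun j => nth 0 [:: 0; 1; 0; a - 1; 0; a - 1; 0; 1] j) 7%N) => //.
    move=> t Gt tA; apply: Aint_sqrt.
    have HW : b%:~R + 2 - 2 * a%:~R = k%:~R * (q%:R) ^+ 2 :> algC.
      rewrite -cast_nat2 -rmorphM -Hk /W1; ring.
    set s := t ^+ 6 + (a%:~R - 2) * t ^+ 4 + t ^+ 2.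
    have Hs : \sum_(j < 8) (nth 0 [:: 0; 1; 0; a - 1; 0; a - 1; 0; 1] j)%:~R * t ^+ j
        = t ^+ 7 + (a%:~R - 1) * t ^+ 5 + (a%:~R - 1) * t ^+ 3 + t :> algC.
      rewrite !big_ord_recr big_ord0 /=; ring.
    have E : (t ^+ 7 + (a%:~R - 1) * t ^+ 5 + (a%:~R - 1) * t ^+ 3 + t) ^+ 2
         = - (k%:~R * (t ^+ 4 * s)) * (q%:R) ^+ 2.
      transitivity (s * (t ^+ 8 + a%:~R * t ^+ 6 + b%:~R * t ^+ 4 + a%:~R * t ^+ 2 + 1)
          - (b%:~R + 2 - 2 * a%:~R) * t ^+ 4 * s); first by rewrite /s; ring.
      rewrite Gt HW; ring.
    rewrite Hs expr_div_n E mulfK ?expf_neq0 //.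
    by rewrite /s; aint.
  + apply: (@not_mono_G a b q (fun j => nth 0 [:: 0; -1; 0; -(a + 1); 0; a + 1; 0; 1] j) 7%N) => //.
    move=> t Gt tA; apply: Aint_sqrt.
    have HW : b%:~R + 2 + 2 * a%:~R = k%:~R * (q%:R) ^+ 2 :> algC.
      rewrite -cast_nat2 -rmorphM -Hk /W2; ring.
    set s := t ^+ 6 + (a%:~R + 2) * t ^+ 4 + t ^+ 2.
    have Hs : \sum_(j < 8) (nth 0 [:: 0; -1; 0; -(a + 1); 0; a + 1; 0; 1] j)%:~R * t ^+ j
        = t ^+ 7 + (a%:~R + 1) * t ^+ 5 - (a%:~R + 1) * t ^+ 3 - t :> algC.
      rewrite !big_ord_recr big_ord0 /=; ring.
    have E : (t ^+ 7 + (a%:~R + 1) * t ^+ 5 - (a%:~R + 1) * t ^+ 3 - t) ^+ 2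
         = - (k%:~R * (t ^+ 4 * s)) * (q%:R) ^+ 2.
      transitivity (s * (t ^+ 8 + a%:~R * t ^+ 6 + b%:~R * t ^+ 4 + a%:~R * t ^+ 2 + 1)
          - (b%:~R + 2 + 2 * a%:~R) * t ^+ 4 * s); first by rewrite /s; ring.
      rewrite Gt HW; ring.
    rewrite Hs expr_div_n E mulfK ?expf_neq0 //.
    by rewrite /s; aint.
- move=> _ _ [q [pq [q3 /dvdzP [k Hk]]]].
  have q1 : (1 < q)%N by apply: prime_gt1.
  have Q0 : (q%:R : algC) != 0 by rewrite pnatr_eq0 -lt0n (ltn_trans _ q1).
  have nd : ~~ ((q%:Z) %| 2)%Z.
    rewrite dvdzE /=; apply/negP => /(dvdn_leq (isT : (0 < 2)%N)).
    by rewrite leqNgt (leq_trans _ q3).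
  apply: (@not_mono_G a b q (fun j => nth 0 [:: 2; 0; a; 0; 2; 0; 0; 0] j) 0%N) => //.
  move=> t Gt tA; apply: Aint_sqrt.
  have HW : a%:~R ^+ 2 - 4 * b%:~R + 8 = k%:~R * (q%:R) ^+ 2 :> algC.
    rewrite -cast_nat2 -rmorphM -Hk /W3; ring.
  have Hs : \sum_(j < 8) (nth 0 [:: 2; 0; a; 0; 2; 0; 0; 0] j)%:~R * t ^+ j
      = 2 * t ^+ 4 + a%:~R * t ^+ 2 + 2 :> algC.
    rewrite !big_ord_recr big_ord0 /=; ring.
  have E : (2 * t ^+ 4 + a%:~R * t ^+ 2 + 2) ^+ 2 = (k%:~R * t ^+ 4) * (q%:R) ^+ 2.
    transitivity (4 * (t ^+ 8 + a%:~R * t ^+ 6 + b%:~R * t ^+ 4 + a%:~R * t ^+ 2 + 1)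
        + (a%:~R ^+ 2 - 4 * b%:~R + 8) * t ^+ 4); first by ring.
    rewrite Gt HW; ring.
  rewrite Hs expr_div_n E mulfK ?expf_neq0 //.
  by aint.
- move=> _ _ _ [[Ha Hb]|[Ha Hb]].
  + have HA : a%:~R = 4 * (a %/ 4)%Z%:~R :> algC.
      by rewrite {1}(divz_eq a 4) Ha addr0 rmorphM mulrC.
    have HB : b%:~R = 4 * (b %/ 4)%Z%:~R + 1 :> algC.
      by rewrite {1}(divz_eq b 4) Hb rmorphD rmorphM mulrC.
    apply: (@not_mono_G a b 4 (fun j => nth 0 [:: 2; 0; a + 2; 0; 2; 0; 0; 0] j) 0%N) => //.
    move=> t Gt tA.
    have t0 : t != 0.
      apply/eqP => t0; move: Gt; rewrite t0 !expr0n /= !mulr0 !add0r => /eqP.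
      by rewrite oner_eq0.
    have Hs : \sum_(j < 8) (nth 0 [:: 2; 0; a + 2; 0; 2; 0; 0; 0] j)%:~R * t ^+ j
        = 2 * t ^+ 4 + (a%:~R + 2) * t ^+ 2 + 2 :> algC.
      rewrite !big_ord_recr big_ord0 /=; ring.
    rewrite Hs.
    set g := (2 * t ^+ 4 + (a%:~R + 2) * t ^+ 2 + 2) / 4%:R / t ^+ 2.
    have -> : (2 * t ^+ 4 + (a%:~R + 2) * t ^+ 2 + 2) / 4%:R = t ^+ 2 * g.
      by rewrite /g; field.
    apply: rpredM; first by aint.
    apply: Aint_quad.
    set C := ((a %/ 4)%Z%:~R ^+ 2 - (b %/ 4)%Z%:~R : algC).
    have -> : g * (g - 1) = C.
      apply/eqP; rewrite -subr_eq0; apply/eqP.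
      rewrite HA HB in Gt.
      transitivity ((4 * (t ^+ 8 + (4 * (a %/ 4)%Z%:~R) * t ^+ 6
          + (4 * (b %/ 4)%Z%:~R + 1) * t ^+ 4 + (4 * (a %/ 4)%Z%:~R) * t ^+ 2 + 1))
          / (16 * t ^+ 4)).
        by rewrite /g /C HA; field.
      by rewrite Gt mulr0 mul0r.
    by rewrite /C; aint.
  + have HA : a%:~R = 4 * (a %/ 4)%Z%:~R + 2 :> algC.
      by rewrite {1}(divz_eq a 4) Ha rmorphD rmorphM mulrC.
    have HB : b%:~R = 4 * (b %/ 4)%Z%:~R + 3 :> algC.
      by rewrite {1}(divz_eq b 4) Hb rmorphD rmorphM mulrC.
    apply: (@not_mono_G a b 4 (fun j => nth 0 [:: 2; 0; a; 0; 2; 0; 0; 0] j) 0%N) => //.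
    move=> t Gt tA; apply: Aint_sqrt.
    have Hs : \sum_(j < 8) (nth 0 [:: 2; 0; a; 0; 2; 0; 0; 0] j)%:~R * t ^+ j
        = 2 * t ^+ 4 + a%:~R * t ^+ 2 + 2 :> algC.
      rewrite !big_ord_recr big_ord0 /=; ring.
    set C := ((a %/ 4)%Z%:~R ^+ 2 + (a %/ 4)%Z%:~R - (b %/ 4)%Z%:~R : algC).
    have E : (2 * t ^+ 4 + a%:~R * t ^+ 2 + 2) ^+ 2 = (C * t ^+ 4) * (4%:R) ^+ 2.
      transitivity (4 * (t ^+ 8 + a%:~R * t ^+ 6 + b%:~R * t ^+ 4 + a%:~R * t ^+ 2 + 1)
          + (a%:~R ^+ 2 - 4 * b%:~R + 8) * t ^+ 4); first by ring.
      rewrite Gt HA HB /C; ring.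
    rewrite Hs expr_div_n E mulfK ?expf_neq0 ?pnatr_eq0 //.
    by rewrite /C; aint.
Qed.
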